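(* Let $G=(V,E)$ be a graph, let $c\ge1$ and $\epsilon\in[0,1/3)$, and let $\kappa(G)=(V,\kappa(E))$ be an $(\epsilon,c)$-kernel of $G$. If $M$ is a matching in $\kappa(G)$ such that every augmenting path in $\kappa(G)$ with respect to $M$ has length at least five, then the size of a maximum matching in $G$ is at most $(3+3\epsilon)|M|$.
   Context: Let $\mathcal N_v$ denote the set of neighbors of $v$ in $G$. A subgraph $\kappa(G)=(V,\kappa(E))$ with $\kappa(E)\subseteq E$ is given, together with a partition of $V$ into tight nodes $\kappa_T(V)$ and slack nodes $\kappa_S(V)$. For $v\in V$ let $\kappa(\mathcal N_v)=\{u\in\mathcal N_v:(u,v)\in\kappa(E)\}$ (the friends of $v$). For $c\ge1$ and $\epsilon\in[0,1/3)$, $\kappa(G)$ is an $(\epsilon,c)$-kernel of $G$ (w.r.t. this partition) iff: (i) $|\kappa(\mathcal N_v)|\le(1+\epsilon)c$ for all $v\in V$; (ii) $|\kappa(\mathcal N_v)|\ge(1-\epsilon)c$ for all $v\in\kappa_T(V)$; (iii) for all $u,v\in\kappa_S(V)$, if $(u,v)\in E$ then $(u,v)\in\kappa(E)$. Given a matching $M$ in a graph $H$, an augmenting path of length $2k+1$ ($k \ge 0$) is a simple path in $H$ with $2k+1$ edges whose two end nodes are unmatched in $M$ and whose edges alternate between non-$M$ and $M$ edges (first and last edges not in $M$). *)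

(* Defs.v *)
From HB Require Import structures.
From mathcomp Require Import all_boot all_order all_algebra.
Set Implicit Arguments. Unset Strict Implicit. Unset Printing Implicit Defensive.
Import Order.TTheory GRing.Theory Num.Theory.

Definition is_graph (T : finType) (e : rel T) : Prop := symmetric e /\ irreflexive e.

Definition nbrs (T : finType) (e : rel T) (v : T) : {set T} := [set u | e v u].

(* (eps,c)-kernel: ke is the edge relation of a subgraph kappa(G) of (T,e);
   tight nodes are [tight], slack nodes its complement. *)
Definition is_kernel (R : realFieldType) (T : finType) (e ke : rel T)
    (tight : {set T}) (eps c : R) : Prop :=
  [/\ symmetric ke, (forall u v, ke u v -> e u v),
      (forall v, (#|nbrs ke v|%:R <= (1 + eps) * c)%R),
      (forall v, v \in tight -> ((1 - eps) * c <= #|nbrs ke v|%:R)%R) &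
      (forall u v, u \notin tight -> v \notin tight -> e u v -> ke u v)].

Definition is_matching (T : finType) (e : rel T) (M : {set {set T}}) : Prop :=
  (forall A, A \in M -> exists u v, e u v /\ A = [set u; v]) /\
  (forall A B, A \in M -> B \in M -> A != B -> [disjoint A & B]).

Definition matched (T : finType) (M : {set {set T}}) (v : T) : bool :=
  [exists A in M, v \in A].

(* Augmenting path in (T,e) w.r.t. M, given as its vertex sequence p;
   it has (size p).-1 edges, which must be odd (2k+1). Edge number i
   (between p_i and p_(i+1), i from 0) lies in M iff i is odd. *)
Definition augmenting_path (T : finType) (e : rel T) (M : {set {set T}})
    (p : seq T) : Prop :=
  match p with
  | [::] => False
  | x :: q =>
      [/\ odd (size p).-1, uniq p, path e x q,
          ~~ matched M x && ~~ matched M (last x q) &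
          (forall i, i < (size p).-1 ->
            ([set nth x p i; nth x p i.+1] \in M) = odd i)]
  end.

(* Main.v *)
Require Import Defs.
From HB Require Import structures.
From mathcomp Require Import all_boot all_order all_algebra.
Import Order.TTheory GRing.Theory Num.Theory.
From mathcomp Require Import lra.

Lemma inj_card (T : finType) (P : {set {set T}}) (D : {set T}) :
  (forall A B, A \in P -> B \in P -> A != B -> [disjoint A & B]) ->
  (forall A, A \in P -> A :&: D != set0) -> #|P| <= #|D|.
Proof.
move=> Hd Hne.
pose g (A : {set T}) := [pick v in A :&: D].
have gin A : A \in P -> exists2 v, g A = Some v & v \in A :&: D.
  move=> AP; rewrite /g; case: pickP => [v Hv|H0]; first by exists v.
  by move: (Hne A AP); case/set0Pn => v; rewrite H0.
have ginj : {in P &, injective g}.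
  move=> A B AP BP gAB; apply/eqP/negPn/negP => nAB.
  have [v gA vA] := gin A AP; have [w gB wB] := gin B BP.
  move: (Hd A B AP BP nAB); rewrite -setI_eq0 => /eqP AB0.
  have vw : v = w by move: gAB; rewrite gA gB => -[].
  subst w; move: vA wB; rewrite !inE => /andP[vA _] /andP[vB _].
  have : v \in A :&: B by rewrite inE vA vB.
  by rewrite AB0 inE.
rewrite -(card_in_imset ginj).
have -> : #|D| = #|[set Some v | v in D]| by rewrite card_imset //; exact: Some_inj.
apply: subset_leq_card; apply/subsetP => o /imsetP[A AP ->].
have [v -> vD] := gin A AP; apply/imsetP; exists v => //.
by move: vD; rewrite inE => /andP[].
Qed.

Theorem theorem3p10 (R : realFieldType) (T : finType) (e ke : rel T)
    (tight : {set T}) (eps c : R) (M : {set {set T}}) :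
  is_graph e ->
  (1 <= c)%R -> (0 <= eps)%R -> (eps < 1 / 3)%R ->
  is_kernel e ke tight eps c ->
  is_matching ke M ->
  (forall p : seq T, augmenting_path ke M p -> 5 <= (size p).-1) ->
  forall M' : {set {set T}}, is_matching e M' ->
    (#|M'|%:R <= (3 + 3 * eps) * #|M|%:R)%R.
Proof.
move=> [esym eirr] c1 e0 e13 [kesym kesub kup klow kslack] [Mform Mdisj] Haug M' [M'form M'disj].
set C := cover M.
have matchedE v : matched M v = (v \in C).
  by rewrite /matched /C /cover; apply/existsP/bigcupP => [[A /andP[]]|[A]] ; [exists A|exists A; apply/andP].
have keirr u : ~~ ke u u by apply/negP => /kesub; rewrite eirr.
have AsubC A : A \in M -> A \subset C by move=> AM; rewrite /C /cover; exact: bigcup_sup.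
have notinM u (A : {set T}) : u \notin C -> u \in A -> (A \in M) = false.
  move=> uC uA; apply/negP => AM; move/subsetP: (AsubC A AM) => /(_ u uA).
  by rewrite (negbTE uC).
have aug1 u w : u \notin C -> w \notin C -> ~~ ke u w.
  move=> uC wC; apply/negP => kuw.
  have uw : u != w by apply/eqP => E; subst w; move: kuw; rewrite (negbTE (keirr u)).
  suff : augmenting_path ke M [:: u; w] by move/Haug.
  split => //=; first by rewrite inE uw.
  - by rewrite kuw.
  - by rewrite !matchedE uC wC.
  - by case=> // _; rewrite (notinM u) // !inE eqxx.
have Mxy x y : [set x; y] \in M -> ke x y /\ x != y.
  move=> xyM; have [a [b [kab E]]] := Mform _ xyM.
  have ab : a != b by apply/eqP => E'; subst b; move: kab; rewrite (negbTE (keirr a)).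
  have xin : x \in [set a; b] by rewrite -E !inE eqxx.
  have yin : y \in [set a; b] by rewrite -E !inE eqxx orbT.
  have xy : x != y.
    apply/eqP => E'; subst y; move: E; rewrite setUid => E.
    have : a \in [set x] by rewrite E !inE eqxx.
    have : b \in [set x] by rewrite E !inE eqxx orbT.
    rewrite !inE => /eqP Eb /eqP Ea; by rewrite Ea Eb eqxx in ab.
  move: xin yin; rewrite !inE => /orP[]/eqP Ex /orP[]/eqP Ey; subst x y.
  - by rewrite eqxx in xy.
  - by split.
  - by split => //; rewrite kesym.
  - by rewrite eqxx in xy.
have aug3 u x y w : u \notin C -> w \notin C -> u != w -> [set x; y] \in M ->
    ke u x -> ke y w -> False.
  move=> uC wC uw xyM kux kyw; have [kxy xy] := Mxy x y xyM.
  have xC : x \in C by move/subsetP: (AsubC _ xyM); apply; rewrite !inE eqxx.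
  have yC : y \in C by move/subsetP: (AsubC _ xyM); apply; rewrite !inE eqxx orbT.
  have neqC a b : a \notin C -> b \in C -> a != b.
    by move=> aC bC; apply/eqP => E; subst b; rewrite bC in aC.
  suff : augmenting_path ke M [:: u; x; y; w] by move/Haug.
  split => //=.
  - rewrite !inE !negb_or (neqC u x) // (neqC u y) // uw xy /=.
    by rewrite eq_sym (neqC w x) // eq_sym (neqC w y).
  - by rewrite kux kxy kyw.
  - by rewrite !matchedE uC wC.
  - case=> [_|[_|[_|//]]] /=.
    + by rewrite (notinM u) // !inE eqxx.
    + by rewrite xyM.
    + by rewrite (notinM w) // !inE eqxx orbT.
set Fu := ~: C.
pose N v := nbrs ke v.
pose f v := #|N v :&: Fu|.
have inN u v : (u \in N v) = ke v u by rewrite /N /nbrs inE.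
have edge A : A \in M -> exists w, \sum_(v in A) f v <= #|N w|.
  move=> AM; have [x [y [kxy E]]] := Mform _ AM.
  have [_ xy] := Mxy x y (eq_ind _ (fun S => S \in M) AM _ E).
  rewrite E big_setU1 /=; last by rewrite inE.
  rewrite big_set1.
  have fle v : f v <= #|N v| by apply: subset_leq_card; apply: subsetIl.
  case: (set_0Vmem (N x :&: Fu)) => [Ex|[u uNx]].
    by exists y; rewrite /f Ex cards0 add0n fle.
  case: (set_0Vmem (N y :&: Fu)) => [Ey|[w wNy]].
    by exists x; rewrite /f Ey cards0 addn0 fle.
  have uC : u \notin C by move: uNx; rewrite inE => /andP[_]; rewrite inE.
  have wC : w \notin C by move: wNy; rewrite inE => /andP[_]; rewrite inE.
  have kxu : ke x u by move: uNx; rewrite inE inN => /andP[].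
  have kyw : ke y w by move: wNy; rewrite inE inN => /andP[].
  have xyM : [set x; y] \in M by rewrite -E.
  have allw u' : u' \in N x :&: Fu -> u' = w.
    move=> H; apply/eqP/negPn/negP => nuw.
    have u'C : u' \notin C by move: H; rewrite inE => /andP[_]; rewrite inE.
    have kxu' : ke x u' by move: H; rewrite inE inN => /andP[].
    by apply: (aug3 u' x y w) => //; rewrite kesym.
  have allu w' : w' \in N y :&: Fu -> w' = u.
    move=> H; apply/eqP/negPn/negP => nwu.
    have w'C : w' \notin C by move: H; rewrite inE => /andP[_]; rewrite inE.
    have kyw' : ke y w' by move: H; rewrite inE inN => /andP[].
    by apply: (aug3 u x y w') => //; [rewrite eq_sym | rewrite kesym].
  have uw : u = w := allw u uNx.
  have fx : f x <= 1.
    by rewrite -(cards1 w); apply: subset_leq_card; apply/subsetP => z /allw ->; rewrite inE.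
  have fy : f y <= 1.
    by rewrite -(cards1 u); apply: subset_leq_card; apply/subsetP => z /allu ->; rewrite inE.
  exists u; apply: (leq_trans (leq_add fx fy)).
  have : #|[set x; y]| <= #|N u|.
    apply: subset_leq_card; apply/subsetP => z; rewrite !inE => /orP[]/eqP->; rewrite -inN inN kesym // ?uw //.
  by rewrite cards2 xy.
have trivM : trivIset M by apply/trivIsetP => A B AM BM; exact: Mdisj.
set S := \sum_(u in Fu) #|N u|.
have Sdc : S = \sum_v f v.
  transitivity (\sum_(u in Fu) \sum_v (ke u v : nat)).
    apply: eq_bigr => u _; rewrite -sum1_card big_mkcond /=.
    by apply: eq_bigr => v _; rewrite inN; case: (ke u v).
  rewrite exchange_big /=; apply: eq_bigr => v _.
  rewrite /f -sum1_card [RHS]big_mkcond [LHS]big_mkcond /=; apply: eq_bigr => u _.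
  by rewrite in_setI inN kesym; case: (u \in Fu); case: (ke v u).
have Sv : \sum_v f v = \sum_(v in C) f v.
  rewrite (bigID (mem C)) /= [X in _ + X]big1 ?addn0 //.
  move=> v vC; apply/eqP; rewrite cards_eq0; apply/eqP/setP => u; rewrite !inE.
  case uC: (u \in C); rewrite ?andbF ?andbT //.
  by apply/negbTE/aug1 => //; rewrite uC.
have Sup : (S%:R <= #|M|%:R * ((1 + eps) * c))%R.
  rewrite Sdc Sv /C big_trivIset // natr_sum.
  apply: (@le_trans _ _ (\sum_(A in M) ((1 + eps) * c))%R).
    apply: ler_sum => A AM; have [w Hw] := edge A AM.
    by apply: le_trans (kup w); rewrite natr_sum -natr_sum ler_nat.
  by rewrite sumr_const mulr_natl.
set Ft := Fu :&: tight.
have Slow : (#|Ft|%:R * ((1 - eps) * c) <= S%:R)%R.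
  have H1 : \sum_(u in Ft) #|N u| <= S.
    by rewrite /S [X in _ <= X](big_setID tight) leq_addr.
  apply: le_trans (_ : (\sum_(u in Ft) #|N u|)%:R <= S%:R)%R; last by rewrite ler_nat.
  rewrite natr_sum mulr_natl -sumr_const; apply: ler_sum => u.
  by rewrite inE => /andP[_ ut]; exact: klow.
have Ctwo : #|C| <= 2 * #|M|.
  apply: leq_trans (leq_card_cover M).1 _.
  rewrite mulnC -sum_nat_const; apply: leq_sum => A AM.
  by have [u [v [_ ->]]] := Mform A AM; rewrite cards2; case: (u != v).
have Mcount : #|M'| <= #|C| + #|Ft|.
  rewrite -(cardsID [set A | A :&: C != set0] M'); apply: leq_add; apply: inj_card.
  - by move=> A B; rewrite !in_setI => /andP[AM _] /andP[BM _]; exact: M'disj.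
  - by move=> A; rewrite in_setI inE => /andP[].
  - by move=> A B; rewrite !in_setD => /andP[_ AM] /andP[_ BM]; exact: M'disj.
  move=> A; rewrite in_setD inE negbK => /andP[/eqP AC AM].
  have [u [v [euv EA]]] := M'form A AM.
  have uC : u \notin C.
    apply/negP => uC; have : u \in A :&: C by rewrite inE uC EA !inE eqxx.
    by rewrite AC inE.
  have vC : v \notin C.
    apply/negP => vC; have : v \in A :&: C by rewrite inE vC EA !inE eqxx orbT.
    by rewrite AC inE.
  apply/set0Pn; case ut: (u \in tight).
    by exists u; rewrite EA !inE eqxx ut uC.
  case vt: (v \in tight).
    by exists v; rewrite EA !inE eqxx orbT vt vC.
  by move: (aug1 u v uC vC); rewrite kslack ?ut ?vt.
have c0 : (0 < c)%R by apply: lt_le_trans c1; exact: ltr01.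
have hab : (#|Ft|%:R * (1 - eps) <= #|M|%:R * (1 + eps) :> R)%R.
  have := le_trans Slow Sup; rewrite !mulrA ler_pM2r //.
have hb : (#|M'|%:R <= 2 * #|M|%:R + #|Ft|%:R :> R)%R.
  have H : #|M'| <= 2 * #|M| + #|Ft| by apply: leq_trans Mcount _; rewrite leq_add2r.
  by move: H; rewrite -(ler_nat R) natrD natrM.
have a0 : (0 <= #|Ft|%:R :> R)%R by exact: ler0n.
have m0 : (0 <= #|M|%:R :> R)%R by exact: ler0n.
have h3 : (0 <= eps * (1 - 3 * eps) * #|M|%:R :> R)%R.
  apply: mulr_ge0 => //; apply: mulr_ge0 => //; lra.
nra.
Qed.
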